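(* Suppose the Boolean algebra $B$ is complete. Let $W$ be a CFG-space over $B$, let $U,V\subset W$ be arbitrary subsets, and let $F:U\to V$ be a contractive map. Then there is a contractive map $F':W\to W$ whose restriction to $U$ is $F$.
   Context: A Boolean metric space over a Boolean algebra $B$ is a set $X$ with a symmetric map $d:X\times X\to B$ such that $d(x,y)=0$ iff $x=y$, and $d(x,z)\le d(x,y)\vee d(y,z)$. A map is contractive if $d(f(x),f(y))\le d(x,y)$ for all $x,y$. A partition of $B$ is a finite family of pairwise disjoint elements with supremum $1$. Given $x_0,\dots,x_n\in X$ and a partition $a_0,\dots,a_n$, $x\in X$ is a convex combination of them with these coefficients if $a_i\wedge d(x,x_i)=0$ for all $i$. $X$ is convex if such a convex combination exists in $X$ for every choice of points and partition; finitely generated if some finite $S\subset X$ has every element of $X$ as a convex combination of elements of $S$. A CFG-space is a convex, finitely generated Boolean metric space. $B$ is complete if every subset of $B$ has a supremum. *)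

(* Defs.v *)
(* A Boolean algebra is a ctbDistrLatticeType
   (complemented distributive lattice with top and bottom). *)
From HB Require Import structures.
From mathcomp Require Import all_boot all_order.
Set Implicit Arguments. Unset Strict Implicit. Unset Printing Implicit Defensive.
Import Order.TTheory.
Local Open Scope order_scope.

Section BoolMetric.
Context {disp : Order.disp_t} {B : ctbDistrLatticeType disp}.

Definition complete_BA : Prop :=
  forall P : B -> Prop, exists s : B,
    (forall x, P x -> x <= s) /\
    (forall u, (forall x, P x -> x <= u) -> s <= u).

Definition is_bmetric {X : Type} (d : X -> X -> B) : Prop :=
  (forall x y, d x y = d y x) /\
  (forall x y, d x y = \bot <-> x = y) /\
  (forall x y z, d x z <= d x y `|` d y z).

Definition contractive {X Y : Type} (dX : X -> X -> B) (dY : Y -> Y -> B)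
  (f : X -> Y) : Prop :=
  forall x y, dY (f x) (f y) <= dX x y.

Definition is_partition (n : nat) (a : 'I_n.+1 -> B) : Prop :=
  (forall i j : 'I_n.+1, i != j -> a i `&` a j = \bot) /\
  \join_(i < n.+1) a i = \top.

Definition convex_comb {X : Type} (d : X -> X -> B) (x : X)
  (n : nat) (pts : 'I_n.+1 -> X) (a : 'I_n.+1 -> B) : Prop :=
  forall i, a i `&` d x (pts i) = \bot.

Definition bconvex {X : Type} (d : X -> X -> B) : Prop :=
  forall (n : nat) (pts : 'I_n.+1 -> X) (a : 'I_n.+1 -> B),
    is_partition a -> exists x, convex_comb d x pts a.

Definition fin_generated {X : Type} (d : X -> X -> B) : Prop :=
  exists (m : nat) (S : 'I_m -> X), forall x : X,
    exists (n : nat) (pts : 'I_n.+1 -> X) (a : 'I_n.+1 -> B),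
      (forall i, exists j, pts i = S j) /\ is_partition a /\ convex_comb d x pts a.

Definition CFG_space {X : Type} (d : X -> X -> B) : Prop :=
  is_bmetric d /\ bconvex d /\ fin_generated d.

End BoolMetric.

(* Main.v *)
Require Import Defs.
From HB Require Import structures.
From mathcomp Require Import all_boot all_order.
From Stdlib Require Import Classical ClassicalEpsilon ProofIrrelevance.
Set Implicit Arguments. Unset Strict Implicit. Unset Printing Implicit Defensive.
Import Order.Theory.
Local Open Scope order_scope.

Section BA.
Context {disp : Order.disp_t} {B : ctbDistrLatticeType disp}.
Implicit Types x y z w : B.

Lemma galois1 x y z : x `&` y <= z -> x <= ~` y `|` z.
Proof.
move=> H; have -> : x = x `&` (y `|` ~` y) by rewrite joinxC meetx1.
rewrite meetUr leUx; apply/andP; split.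
  by apply: lexUr.
by apply: lexUl; apply: leIxr.
Qed.

Lemma galois2 x y z : x <= ~` y `|` z -> x `&` y <= z.
Proof.
move=> H; apply: le_trans (leI2 H (le_refl y)) _.
by rewrite meetUl meetCx join0x leIxl.
Qed.

Lemma cover_le n (a : 'I_n.+1 -> B) z w :
  \join_(i < n.+1) a i = \top -> (forall i, a i `&` z <= w) -> z <= w.
Proof.
move=> Ha H.
have : \top <= ~` z `|` w.
  by rewrite -Ha; apply/joinsP => i _; apply: galois1.
move=> /galois2; by rewrite meet1x.
Qed.

Lemma kill x y z : x `&` y = \bot -> x `&` (y `|` z) <= z.
Proof. by move=> H; rewrite meetUr H join0x leIxr. Qed.

Lemma split_le x y : x <= (x `&` ~` y) `|` y.
Proof. by rewrite joinIl joinCx meetx1 lexUl. Qed.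

Lemma disjointify n (e : 'I_n.+1 -> B) :
  \join_(i < n.+1) e i = \top ->
  exists e' : 'I_n.+1 -> B, is_partition e' /\ forall i, e' i <= e i.
Proof.
move=> He.
pose e' (i : 'I_n.+1) := e i `&` ~` (\join_(k < n.+1 | (k < i)%N) e k).
exists e'; split; last by move=> i; rewrite /e' leIxl.
split.
  have key : forall i j : 'I_n.+1, (i < j)%N -> e' i `&` e' j = \bot.
    move=> i j lij; apply/eqP; rewrite -lex0.
    apply: le_trans (leI2 (leIxl _ (le_refl (e i))) (leIxr _ (le_refl _))) _.
    rewrite -[X in _ <= X](meetxC (e i)); apply: leI2 => //; rewrite leC.
    by apply: (joins_min (j := i)).
  move=> i j nij; case: (ltngtP i j) => [lij|lji|eij].
  - exact: key.
  - by rewrite meetC; exact: key.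
  - by move: nij; rewrite (val_inj eij) eqxx.
apply/eqP; rewrite -le1x -He.
set J := \join_(i < n.+1) e' i.
suff H : forall k (i : 'I_n.+1), (i < k)%N -> e i <= J.
  by apply/joinsP => i _; apply: (H i.+1).
elim=> [//|k IH] i; rewrite ltnS leq_eqVlt => /orP [/eqP ik|]; last exact: IH.
apply: le_trans (split_le _ (\join_(k0 < n.+1 | (k0 < i)%N) e k0)) _.
rewrite leUx; apply/andP; split.
  by apply: (joins_min (j := i)).
apply/joinsP => k0 lk0; apply: IH; by rewrite -ik.
Qed.

Lemma lem3 (r s c u : B) : c `&` u = \bot -> ~` r `&` c `&` (u `|` (r `|` s)) <= s.
Proof.
move=> H; rewrite meetUr leUx; apply/andP; split.
  apply: le_trans (_ : c `&` u <= s); last by rewrite H le0x.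
  by apply: leI2 => //; apply: leIxr.
apply: le_trans (_ : ~` r `&` (r `|` s) <= s).
  by apply: leI2 => //; apply: leIxl.
by rewrite meetUr meetCx join0x leIxr.
Qed.

Lemma lem4 (a x e v r : B) : a `&` x = \bot -> a <= e -> e `&` v <= r -> a `&` (x `|` v) <= r.
Proof.
move=> H1 H2 H3; rewrite meetUr H1 join0x; apply: le_trans H3.
exact: leI2.
Qed.

End BA.

Section Metric.
Context {disp : Order.disp_t} {B : ctbDistrLatticeType disp}.
Variables (W : Type) (d : W -> W -> B).
Hypothesis hm : is_bmetric d.

Lemma dsym x y : d x y = d y x. Proof. exact: hm.1. Qed.
Lemma dtri x y z : d x z <= d x y `|` d y z. Proof. exact: hm.2.2. Qed.
Lemma d0 x y : d x y = \bot -> x = y. Proof. exact: (proj1 (hm.2.1 x y)). Qed.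
Lemma dxx x : d x x = \bot. Proof. exact: (proj2 (hm.2.1 x x)). Qed.

Lemma uniq_comb n (pts : 'I_n.+1 -> W) a x y :
  is_partition a -> convex_comb d x pts a -> convex_comb d y pts a -> x = y.
Proof.
move=> [_ Ha] Hx Hy; apply: d0; apply/eqP; rewrite -lex0.
apply: (cover_le Ha) => i.
apply: le_trans (leI2 (le_refl _) (dtri x (pts i) y)) _.
by rewrite meetUr Hx join0x dsym Hy.
Qed.

Hypothesis hc : bconvex d.
Hypothesis hcomp : complete_BA (B := B).

Lemma one_point m (S : 'I_m.+1 -> W)
  (hS : forall x, exists n (pts : 'I_n.+1 -> W) (a : 'I_n.+1 -> B), (forall i, exists j, pts i = S j) /\
          is_partition a /\ convex_comb d x pts a)
  (A : W -> Prop) (G : W -> W)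
  (HG : forall a b, A a -> A b -> d (G a) (G b) <= d a b) p :
  exists y, forall b, A b -> d y (G b) <= d p b.
Proof.
have [Q [HQ1 HQ2]] := hcomp (fun x => exists a, A a /\ x = ~` d p a).
pose j0 : 'I_m.+1 := ord0.
pose P (i : 'I_m.+1) := fun x => (exists a, A a /\ exists n (pts : 'I_n.+1 -> W) c,
   is_partition c /\ convex_comb d (G a) pts c /\ exists k, pts k = S i /\ x = ~` d p a `&` c k)
   \/ (i = j0 /\ x = ~` Q).
pose e i := proj1_sig (constructive_indefinite_description _ (hcomp (P i))).
have He i : (forall x, P i x -> x <= e i) /\
    (forall u, (forall x, P i x -> x <= u) -> e i <= u).
  exact: (proj2_sig (constructive_indefinite_description _ (hcomp (P i)))).
have C1 i b : A b -> e i `&` d (S i) (G b) <= d p b.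
  move=> Ab; apply: galois2; apply: (He i).2.
  move=> x [[a [Aa [n [pts [c [_ [Hc [k [Hk ->]]]]]]]]]|[_ ->]]; apply: galois1.
    apply: le_trans (leI2 (le_refl _) (dtri (S i) (G a) (G b))) _.
    apply: le_trans (leI2 (le_refl _) (leU2 (le_refl _) (le_trans (HG _ _ Aa Ab) (dtri a p b)))) _.
    rewrite [d a p]dsym; apply: lem3.
    by rewrite -Hk dsym Hc.
  apply: leIxl; by rewrite leCx; apply: HQ1; exists b.
have C2 : \join_(i < m.+1) e i = \top.
  apply/eqP; rewrite -le1x -(joinxC Q) leUx; apply/andP; split.
    apply: HQ2 => x [a [Aa ->]].
    have [n [pts [c [Hpts [Hpart Hcc]]]]] := hS (G a).
    apply: (cover_le Hpart.2) => k.
    have [j Hj] := Hpts k.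
    apply: le_trans (_ : e j <= _); last by apply: (joins_min (j := j)).
    rewrite meetC; apply: (He j).1; left; exists a; split => //.
    by exists n, pts, c; split => //; split => //; exists k.
  apply: le_trans (_ : e j0 <= _); last by apply: (joins_min (j := j0)).
  by apply: (He j0).1; right.
have [e' [Hpart He']] := disjointify C2.
have [y Hy] := hc S Hpart.
exists y => b Ab.
apply: (cover_le Hpart.2) => i.
apply: le_trans (leI2 (le_refl _) (dtri y (S i) (G b))) _.
apply: lem4 (Hy i) (He' i) (C1 i b Ab).
Qed.

Lemma lem5 (a b u v w : B) : a `&` u = \bot -> b `&` w = \bot ->
  a `&` b `&` (u `|` (v `|` w)) <= a `&` b `&` v.
Proof.
move=> Hu Hw; rewrite !meetUr leUx; apply/andP; split.
  have -> : a `&` b `&` u = \bot by rewrite meetAC Hu meet0x.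
  by rewrite le0x.
rewrite leUx; apply/andP; split => //.
have -> : a `&` b `&` w = \bot by rewrite -meetA Hw meetx0.
by rewrite le0x.
Qed.

Lemma extend_list m (S : 'I_m.+1 -> W)
  (hS : forall x, exists n (pts : 'I_n.+1 -> W) (a : 'I_n.+1 -> B), (forall i, exists j, pts i = S j) /\
          is_partition a /\ convex_comb d x pts a)
  (U : W -> Prop) (G0 : W -> W)
  (H0 : forall a b, U a -> U b -> d (G0 a) (G0 b) <= d a b) (l : list W) :
  exists G : W -> W, (forall a b, (U a \/ List.In a l) -> (U b \/ List.In b l) ->
     d (G a) (G b) <= d a b) /\ (forall x, U x -> G x = G0 x).
Proof.
elim: l => [|p l [G [HG1 HG2]]].
  exists G0; split => // a b [Ua|[]] [Ub|[]]; exact: H0.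
have [y Hy] := one_point hS HG1 p.
pose G' x := if excluded_middle_informative (x = p) then y else G x.
have Gp : (U p \/ List.In p l) -> y = G p.
  move=> Ap; apply: d0; apply/eqP; rewrite -lex0 -(dxx p); exact: Hy.
have G'p : G' p = y by rewrite /G'; case: excluded_middle_informative.
have G'n x : x <> p -> G' x = G x.
  by rewrite /G'; case: excluded_middle_informative.
exists G'; split.
  move=> a b Ha Hb.
  case: (classic (a = p)) => [->|nap]; case: (classic (b = p)) => [->|nbp].
  - by rewrite dxx le0x.
  - rewrite G'p G'n //; apply: Hy; case: Hb => [?|[?|?]]; [by left| by case: nbp | by right].
  - rewrite G'p G'n // dsym [d a p]dsym; apply: Hy; case: Ha => [?|[?|?]]; [by left| by case: nap | by right].
  - rewrite !G'n //; apply: HG1.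
      by case: Ha => [?|[?|?]]; [left| case: nap | right].
    by case: Hb => [?|[?|?]]; [left| case: nbp | right].
move=> x Ux; case: (classic (x = p)) => [xp|nxp]; last by rewrite G'n // HG2.
by rewrite xp G'p Gp -xp ?HG2 //; left.
Qed.

End Metric.

Lemma in_In (T : eqType) (x : T) (s : seq T) : x \in s -> List.In x s.
Proof.
elim: s => [//|y s IH]; rewrite in_cons => /orP [/eqP ->|/IH]; [by left|by right].
Qed.

Theorem theorem4 (disp : Order.disp_t) (B : ctbDistrLatticeType disp)
  (W : Type) (d : W -> W -> B)
  (U V : W -> Prop) (F : {x : W | U x} -> {y : W | V y}) :
  complete_BA (B := B) ->
  CFG_space d ->
  contractive (fun x y : {x : W | U x} => d (proj1_sig x) (proj1_sig y))
              (fun x y : {y : W | V y} => d (proj1_sig x) (proj1_sig y)) F ->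
  exists F' : W -> W, contractive d d F' /\
    (forall x : {x : W | U x}, F' (proj1_sig x) = proj1_sig (F x)).
Proof.
move=> hcomp [hm [hc [m [S hS]]]] HF.
case: m S hS => [|m] S hS.
  exists (fun x => x); split; first by move=> x y.
  move=> [x Ux]; have [n [pts [a [Hp _]]]] := hS x.
  by have [[j ?] _] := Hp ord0.
pose G0 x := match excluded_middle_informative (U x) with
             | left H => proj1_sig (F (exist _ x H)) | right _ => x end.
have H0 : forall a b, U a -> U b -> d (G0 a) (G0 b) <= d a b.
  move=> a b Ua Ub; rewrite /G0.
  case: excluded_middle_informative => [Ua'|/(_ Ua) []].
  case: excluded_middle_informative => [Ub'|/(_ Ub) []].
  exact: (HF (exist _ a Ua') (exist _ b Ub')).
have [G [HG1 HG2]] := extend_list hm hc hcomp hS H0 (List.map S (enum 'I_m.+1)).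
have inS : forall j, List.In (S j) (List.map S (enum 'I_m.+1)).
  by move=> j; apply: List.in_map; apply: in_In; rewrite mem_enum.
have hc' : forall x, exists y, exists n (pts : 'I_n.+1 -> W) (a : 'I_n.+1 -> B),
    (forall i, exists j, pts i = S j) /\ is_partition a /\ convex_comb d x pts a /\
    convex_comb d y (fun i => G (pts i)) a.
  move=> x; have [n [pts [a [Hp [Ha Hx]]]]] := hS x.
  have [y Hy] := @hc n (fun i => G (pts i)) a Ha.
  by exists y, n, pts, a.
pose F' x := proj1_sig (constructive_indefinite_description _ (hc' x)).
have HF' x : exists n (pts : 'I_n.+1 -> W) (a : 'I_n.+1 -> B),
    (forall i, exists j, pts i = S j) /\ is_partition a /\ convex_comb d x pts a /\
    convex_comb d (F' x) (fun i => G (pts i)) a.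
  exact: (proj2_sig (constructive_indefinite_description _ (hc' x))).
have inA : forall n (pts : 'I_n.+1 -> W), (forall i, exists j, pts i = S j) ->
   forall i, U (pts i) \/ List.In (pts i) (List.map S (enum 'I_m.+1)).
  by move=> n pts Hp i; right; have [j ->] := Hp i.
exists F'; split.
  move=> x x'.
  have [n [pts [a [Hp [Ha [Hx Hy]]]]]] := HF' x.
  have [n' [pts' [b [Hp' [Hb [Hx' Hy']]]]]] := HF' x'.
  set y := F' x in Hy *; set y' := F' x' in Hy' *.
  have key : forall i j, a i `&` b j `&` d y y' <= d x x'.
    move=> i j.
    apply: le_trans (leI2 (le_refl _) (dtri hm y (G (pts i)) y')) _.
    apply: le_trans (leI2 (le_refl _) (leU2 (le_refl _) (dtri hm (G (pts i)) (G (pts' j)) y'))) _.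
    have h2 : b j `&` d (G (pts' j)) y' = \bot by rewrite (dsym hm); exact: Hy'.
    apply: le_trans (lem5 _ (Hy i) h2) _.
    apply: le_trans (leI2 (le_refl _) (HG1 _ _ (inA _ _ Hp i) (inA _ _ Hp' j))) _.
    apply: le_trans (leI2 (le_refl _) (dtri hm (pts i) x (pts' j))) _.
    apply: le_trans (leI2 (le_refl _) (leU2 (le_refl _) (dtri hm x x' (pts' j)))) _.
    have h3 : a i `&` d (pts i) x = \bot by rewrite (dsym hm); exact: Hx.
    have h4 : b j `&` d x' (pts' j) = \bot by exact: Hx'.
    apply: le_trans (lem5 _ h3 h4) _.
    exact: leIxr.
  apply: (cover_le Ha.2) => i; apply: galois2.
  apply: (cover_le Hb.2) => j; apply: galois1.
  by rewrite [b j `&` a i]meetC; apply: key.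
move=> [x Ux] /=.
have [n [pts [a [Hp [Ha [Hx Hy]]]]]] := HF' x.
rewrite (uniq_comb hm Ha Hy (y := G x)).
  rewrite HG2 // /G0; case: excluded_middle_informative => [Ux'|//].
  by rewrite (proof_irrelevance _ Ux' Ux).
move=> i; apply/eqP; rewrite -lex0 -(Hx i).
by apply: leI2 => //; apply: HG1 => //; [left | exact: inA].
Qed.
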